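(* Every subset $X\subseteq\mathbb{Z}_6^2$ with $|X|=13$ contains a subset $S$ with $|S|=6$ and $\sum_{s\in S}s=(0,0)$. Consequently (since the $12$-element set $\{0,1\}\times\mathbb{Z}_6$ contains no such $6$-element zero-sum subset) $g(\mathbb{Z}_6^2)=13$.
   Context: For a finite abelian group $G$, $g(G)$ is the smallest positive integer $t$ such that every subset $X\subseteq G$ with $|X|\ge t$ contains a subset $S$ with $|S|=\exp(G)$ and $\sum_{s\in S}s=0_G$. Here $\exp(\mathbb{Z}_6^2)=6$. *)

(* Defs.v *)
From HB Require Import structures.
From mathcomp Require Import all_boot all_order all_algebra.
Set Implicit Arguments. Unset Strict Implicit. Unset Printing Implicit Defensive.
Import GRing.Theory.
Local Open Scope ring_scope.

Notation Z6sq := ('Z_6 * 'Z_6)%type.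

Definition expZ6sq : nat := 6.

Definition has_zs6 (X : {set Z6sq}) : Prop :=
  exists S : {set Z6sq}, S \subset X /\ #|S| = expZ6sq /\ \sum_(s in S) s = 0.

Definition g_prop (t : nat) : Prop :=
  forall X : {set Z6sq}, (t <= #|X|)%N -> has_zs6 X.

Definition g_is (t : nat) : Prop :=
  (0 < t)%N /\ g_prop t /\ forall u : nat, (0 < u)%N -> g_prop u -> (t <= u)%N.

(* Main.v *)
Require Import Defs.
From mathcomp Require Import all_boot all_order all_algebra.
From Stdlib Require Import Classical.
Set Implicit Arguments. Unset Strict Implicit. Unset Printing Implicit Defensive.
Import GRing.Theory.
Local Open Scope ring_scope.

Definition grid := seq (seq bool).
Definition idx : seq nat := iota 0 6.
Definition mkg (f : nat -> nat -> bool) : grid := [seq [seq f i j | j <- idx] | i <- idx].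
Definition memg (g : grid) (y : Z6sq) : bool := nth false (nth [::] g (y.1 : nat)) (y.2 : nat).
Definition eg : grid := [::].
Definition g0 : grid := [:: [:: true]].
Fixpoint orrow (r s : seq bool) : seq bool :=
  match r, s with
  | a :: r', b :: s' => (a || b) :: orrow r' s'
  | [::], _ => s
  | _, [::] => r
  end.
Fixpoint ug (a b : grid) : grid :=
  match a, b with
  | r :: a', s :: b' => orrow r s :: ug a' b'
  | [::], _ => b
  | _, [::] => a
  end.
Definition shiftn (g : grid) (x : Z6sq) : grid :=
  [seq [seq nth false r j | j <- rot (x.2 : nat) idx] | r <- [seq nth [::] g i | i <- rot (x.1 : nat) idx]].
Fixpoint stepL (prev : grid) (s : seq grid) (x : Z6sq) : seq grid :=
  if s is a :: s' then ug a (shiftn prev x) :: stepL a s' x else [::].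
Definition stepS (s : seq grid) (x : Z6sq) : seq grid :=
  if s is a :: s' then a :: stepL a s' x else [::].
Fixpoint sumsB (b : seq grid) (Y : seq Z6sq) : seq grid :=
  if Y is x :: Yr then stepS (sumsB b Yr) x else b.

Definition sums := sumsB (g0 :: nseq 5 eg).

Fixpoint search (r : nat) (st : seq grid) (cands : seq Z6sq) : bool :=
  match r with
  | 0 => false
  | r'.+1 =>
    let F := nth eg st 5 in
    let C := [seq w <- cands | ~~ memg F w] in
    (fix go (C : seq Z6sq) : bool :=
       match C with
       | [::] => true
       | w :: C' => if (size C < r)%N then true
                    else if search r' (stepS st w) C' then go C' else false
       end) C
  end.

Definition allZ : seq Z6sq := [seq (inZp i, inZp j) | i <- iota 0 6, j <- iota 0 6].
Definition candL : seq Z6sq := behead allZ.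

Lemma rotZ (a b : 'Z_6) : nth 0%N (rot a idx) b = (b + a)%R :> nat.
Proof.
by case: a b => [[|[|[|[|[|[|m]]]]]] Ha] [[|[|[|[|[|[|n]]]]]] Hb].
Qed.

Lemma memg_shift g x y : memg (shiftn g x) y = memg g (y + x).
Proof.
rewrite /memg /shiftn.
rewrite (nth_map [::]) ?size_map ?size_rot ?size_iota ?ltn_ord //.
rewrite (nth_map 0%N) ?size_map ?size_rot ?size_iota ?ltn_ord //.
rewrite (nth_map 0%N) ?size_map ?size_rot ?size_iota ?ltn_ord //.
by rewrite !rotZ.
Qed.

Lemma nth_orrow r s j : nth false (orrow r s) j = nth false r j || nth false s j.
Proof.
elim: r s j => [|a r IH] [|b s] [|j] //=; by rewrite ?orbF.
Qed.

Lemma nth_ug a b i : nth [::] (ug a b) i = orrow (nth [::] a i) (nth [::] b i).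
Proof.
elim: a b i => [|r a IH] [|s b] [|i] //=; rewrite ?nth_nil; by [case: r | case: s | case: (nth [::] a i) | case: (nth [::] b i)].
Qed.

Lemma memg_ug a b y : memg (ug a b) y = memg a y || memg b y.
Proof. by rewrite /memg nth_ug nth_orrow. Qed.

Lemma memg_eg y : memg eg y = false.
Proof. by rewrite /memg /eg !nth_nil. Qed.

Lemma nth_stepL prev s x k :
  nth eg (stepL prev s x) k = if (k < size s)%N then ug (nth eg s k) (shiftn (nth eg (prev :: s) k) x) else eg.
Proof.
elim: s prev k => [|a s IH] prev [|k] //=; by rewrite IH.
Qed.

Lemma size_stepS s x : size (stepS s x) = size s.
Proof.
case: s => [|a s] //=; congr S; elim: s a => [|b s IH] a //=; by rewrite IH.
Qed.

Lemma nth_stepS s x k : nth eg (stepS s x) k =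
  if k is k'.+1 then (if (k < size s)%N then ug (nth eg s k) (shiftn (nth eg s k') x) else eg)
  else nth eg s 0.
Proof.
case: s => [|a s]; first by case: k.
by case: k => [|k] //=; rewrite nth_stepL.
Qed.

Lemma memg_g0 y : memg g0 y = (y == 0).
Proof. by case: y => [[[|[|[|[|[|[|a]]]]]] Ha] [[|[|[|[|[|[|b]]]]]] Hb]]. Qed.

Lemma size_sumsB b Y : size (sumsB b Y) = size b.
Proof. by elim: Y => [|x Y IH] //=; rewrite size_stepS IH. Qed.

Lemma sums_sound n Y k y : memg (nth eg (sumsB (g0 :: nseq n eg) Y) k) y ->
  exists T, [/\ subseq T Y, size T = k & \sum_(t <- T) t = - y].
Proof.
elim: Y k y => [|x Y IH] k y /=.
  case: k => [|k] /=.
    rewrite memg_g0 => /eqP ->; exists [::]; by rewrite big_nil oppr0.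
  by rewrite nth_nseq; case: ifP; rewrite memg_eg.
rewrite nth_stepS; case: k => [|k].
  move/IH => [T [sT szT sumT]]; exists T; split => //.
  exact: (subseq_trans sT (subseq_cons _ _)).
case: ifP => _; last by rewrite memg_eg.
rewrite memg_ug memg_shift => /orP [/IH|/IH] [T [sT szT sumT]].
  exists T; split => //; exact: (subseq_trans sT (subseq_cons _ _)).
exists (x :: T); split => //=; first by rewrite eqxx.
  by rewrite szT.
by rewrite big_cons sumT opprD addrCA subrr addr0.
Qed.

Lemma sums_complete n Y T : subseq T Y -> (size T <= n)%N ->
  memg (nth eg (sumsB (g0 :: nseq n eg) Y) (size T)) (- \sum_(t <- T) t).
Proof.
elim: Y T => [|x Y IH] T.
  by rewrite subseq0 => /eqP -> _; rewrite big_nil oppr0 /= memg_g0.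
move=> /= sT szT; rewrite nth_stepS.
case: T sT szT => [|t T] sT szT.
  by have := IH [::] (sub0seq _) szT.
rewrite size_sumsB /= ltnS (leq_trans szT) ?size_nseq //.
move: sT => /=; case: eqP => [-> sT|_ sT].
  rewrite memg_ug memg_shift; apply/orP; right.
  rewrite big_cons opprD addrAC addNr add0r.
  apply: IH => //; exact: ltnW.
rewrite memg_ug; apply/orP; left.
exact: (IH (t :: T)).

Qed.

Section Sound.
Variable X : {set Z6sq}.
Hypothesis nz : ~ has_zs6 X.

Lemma zs_of (T : seq Z6sq) : uniq T -> size T = 6%N -> {subset T <= X} ->
  \sum_(t <- T) t = 0 -> False.
Proof.
move=> uT szT subT sumT; apply: nz; exists [set t in T]; split; [|split].
- by apply/subsetP => t; rewrite inE; apply: subT.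
- by rewrite cardsE; move/card_uniqP: uT => ->; rewrite szT.
- by rewrite (eq_bigl (mem T)) -?big_uniq // => t; rewrite inE.
Qed.

Lemma forb_ok Y w : uniq Y -> w \notin Y -> {subset w :: Y <= X} ->
  ~~ memg (nth eg (sums Y) 5) w.
Proof.
move=> uY wY sub; apply/negP => /sums_sound [T [sT szT sumT]].
apply: (zs_of (T := w :: T)).
- rewrite /= (subseq_uniq sT uY) andbT.
  by apply: contra wY; apply: mem_subseq.
- by rewrite /= szT.
- move=> t; rewrite inE => /orP [/eqP ->|tT]; apply: sub; first exact: mem_head.
  by rewrite inE (mem_subseq sT tT) orbT.
- by rewrite big_cons sumT subrr.
Qed.

Lemma search_sound r : forall Y cands W, search r (sums Y) cands ->
  uniq (Y ++ W) -> subseq W cands -> {subset Y ++ W <= X} -> (size W < r)%N.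
Proof.
elim: r => [|r IHr] Y cands W //= Hs uYW sW subX.
have sWC : subseq W [seq w <- cands | ~~ memg (nth eg (sums Y) 5) w].
  rewrite subseq_filter sW andbT; apply/allP => w wW.
  move: uYW; rewrite cat_uniq => /and3P [uY hYW uW].
  apply: forb_ok => //.
    by apply: contra hYW => wY; apply/hasP; exists w.
  move=> t; rewrite inE => /orP [/eqP ->|tY]; apply: subX; rewrite mem_cat ?wW ?tY ?orbT //.
move: Hs sWC; move: (filter _ _) => C.
elim: C W uYW subX {sW} => [|c C IHC] W uYW subX.
  by move=> _; rewrite subseq0 => /eqP ->.
case: ifP => [hsz _ sWC|_]; first exact: leq_ltn_trans (size_subseq sWC) hsz.
case Hrec: (search r (stepS (sums Y) c) C) => // Hgo.
case: W uYW subX => [|w W] uYW subX //=.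
case: eqP => [e|_] sWC; last exact: (IHC (w :: W)).
subst c; have pe : perm_eq (Y ++ [:: w] ++ W) ([:: w] ++ Y ++ W) by rewrite perm_catCA.
have := IHr (w :: Y) C W Hrec _ sWC _; apply.
  by rewrite -(perm_uniq pe).
by move=> z; rewrite -(perm_mem pe) => /subX.
Qed.

End Sound.

Lemma comp : search 12 (sums [:: 0]) candL = true.
Proof. vm_compute. reflexivity. Qed.

Lemma allZP (x : Z6sq) : x \in allZ.
Proof. by case: x => [[[|[|[|[|[|[|a]]]]]] Ha] [[|[|[|[|[|[|b]]]]]] Hb]]. Qed.

Lemma candL_uniq : uniq candL. Proof. by []. Qed.
Lemma candL_0 : (0 : Z6sq) \notin candL. Proof. by []. Qed.
Lemma allZ_eq : allZ = 0 :: candL. Proof. by apply/eqP. Qed.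

Lemma main_free (X : {set Z6sq}) : 0 \in X -> ~ has_zs6 X -> (#|X| < 13)%N.
Proof.
move=> X0 nz.
set W := [seq x <- candL | x \in X].
have uW : uniq W by rewrite filter_uniq // candL_uniq.
have := @search_sound X nz 12 [:: 0] candL W comp.
have W0 : 0 \notin W by rewrite mem_filter (negbTE candL_0) andbF.
have u1 : uniq ([:: 0] ++ W) by rewrite cat1s cons_uniq W0 uW.
move=> /(_ u1 (filter_subseq _ _)) H.
have {H} H : (size W < 12)%N.
  apply: H => z; rewrite inE => /orP [/eqP ->|] //; by rewrite mem_filter => /andP [].
rewrite (cardsD1 (0 : Z6sq)) X0 add1n ltnS.
suff -> : #|X :\ (0 : Z6sq)| = size W by [].
rewrite -(card_uniqP uW); apply: eq_card => z.
rewrite !inE mem_filter andbC.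
have := allZP z; rewrite allZ_eq inE.
by case: eqP => [->|_] //= ->.
Qed.

Lemma mul6Z (a : 'Z_6) : a *+ 6 = 0.
Proof. by apply: val_inj; rewrite Zp_mulrn /= modnMl. Qed.

Lemma mul6 (x : Z6sq) : x *+ 6 = 0.
Proof.
have pm : forall n, x *+ n = (x.1 *+ n, x.2 *+ n).
  by elim => [|n IH] //; rewrite !mulrS IH.
by rewrite pm !mul6Z.
Qed.

Lemma no13 (X : {set Z6sq}) : (13 <= #|X|)%N -> has_zs6 X.
Proof.
move=> hX.
have [x0 x0X] : exists x0, x0 \in X.
  by apply/set0Pn; rewrite -card_gt0 (leq_trans _ hX).
set X' := [set y - x0 | y : Z6sq in X].
have cX' : #|X'| = #|X| by rewrite card_imset //; apply: subIr.
have X'0 : 0 \in X' by apply/imsetP; exists x0 => //; rewrite subrr.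
apply: NNPP => nz.
have : ~ has_zs6 X'.
  move=> [S' [sS' [cS' sumS']]]; apply: nz.
  exists [set y + x0 | y : Z6sq in S']; split; [|split].
  - apply/subsetP => z /imsetP [y yS' ->].
    have := subsetP sS' y yS'; case/imsetP => z' z'X ->.
    by rewrite subrK.
  - by rewrite card_imset //; apply: addIr.
  - rewrite big_imset /=; last by move=> a b _ _; apply: addIr.
    by rewrite big_split /= sumS' sumr_const cS' add0r mul6.
by move/(main_free X'0); rewrite cX' ltnNge hX.
Qed.

Definition Y0 : seq Z6sq := [seq (inZp i, inZp j) | i <- iota 0 2, j <- iota 0 6].
Definition X0 : {set Z6sq} := [set x in Y0].

Lemma Y0_uniq : uniq Y0. Proof. by []. Qed.

Lemma X0_card : #|X0| = 12%N.
Proof. by rewrite cardsE; move/card_uniqP: Y0_uniq => ->. Qed.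

Lemma X0_comp : memg (nth eg (sumsB (g0 :: nseq 6 eg) Y0) 6) (- 0) = false.
Proof. vm_compute. reflexivity. Qed.

Lemma X0_free : ~ has_zs6 X0.
Proof.
move=> [S [sS [cS sumS]]].
set T := [seq x <- Y0 | x \in S].
have uT : uniq T by rewrite filter_uniq // Y0_uniq.
have eT : T =i S.
  move=> z; rewrite mem_filter; case zS: (z \in S) => //=.
  by have := subsetP sS z zS; rewrite inE => ->.
have szT : size T = 6%N.
  by rewrite -(card_uniqP uT) (eq_card eT) cS.
have := @sums_complete 6 Y0 T (filter_subseq _ _).
rewrite szT => /(_ (leqnn _)).
rewrite big_uniq // (eq_bigl (mem S)) // sumS X0_comp.
by [].
Qed.

Local Close Scope ring_scope.

Theorem theorem4p1 :
  (forall X : {set Z6sq}, #|X| = 13 -> has_zs6 X) /\ g_is 13.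
Proof.
split; first by move=> X hX; apply: no13; rewrite hX.
split => //; split; first by move=> X; apply: no13.
move=> u u0 gu; rewrite leqNgt; apply/negP => hu.
by apply: X0_free; apply: gu; rewrite X0_card.
Qed.
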